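(* For every integer $n>2$ and every automorphism $\varphi\in\mathrm{Aut}(F)$, $(\varphi(r_1),\varphi(r_2))\sim_{AC}(r_1,r_2)$, where $(r_1,r_2)=\mathrm{AK}(n)=(xyxy^{-1}x^{-1}y^{-1},\ x^ny^{-(n+1)})$.
   Context: $F=F(x,y)$ is the free group on $\{x,y\}$. The Akbulut–Kurby pair is $\mathrm{AK}(n)=(xyxy^{-1}x^{-1}y^{-1},\ x^{n}y^{-(n+1)})$, i.e. the presentation $\langle x,y\mid xyx=yxy,\ x^n=y^{n+1}\rangle$ of the trivial group. The Andrews–Curtis (AC) moves on a pair $(r_1,r_2)\in F^2$ are: replace $r_i$ by $r_ir_j$ ($i\ne j$); replace $r_i$ by $r_i^{-1}$; replace $r_i$ by $w^{-1}r_iw$ for some $w\in F$. Two pairs are AC-equivalent, $\sim_{AC}$, if one can be obtained from the other by a finite sequence of AC-moves. *)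

(* Defs.v *)
(* The free group F = F(x,y) on two generators, modelled
   concretely as the set of freely reduced words over {x, x^-1, y, y^-1}. *)
From mathcomp Require Import all_boot.
From Stdlib Require Import Relations.
Set Implicit Arguments. Unset Strict Implicit. Unset Printing Implicit Defensive.

(* A letter (g, s): g = false is x, g = true is y; s = false is exponent +1,
   s = true is exponent -1. *)
Definition letter := (bool * bool)%type.
Definition word := seq letter.
Definition inv_letter (a : letter) : letter := (a.1, ~~ a.2).

Fixpoint reducedb (w : word) : bool :=
  match w with
  | a :: ((b :: _) as t) => (b != inv_letter a) && reducedb t
  | _ => true
  end.

Definition push (a : letter) (s : word) : word :=
  match s with
  | b :: t => if b == inv_letter a then t else a :: s
  | [::] => [:: a]
  end.

Definition reduce (w : word) : word := foldr push [::] w.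

Lemma reducedb_tail a t : reducedb (a :: t) -> reducedb t.
Proof. by case: t => [|b t] //= /andP[]. Qed.

Lemma push_reduced a s : reducedb s -> reducedb (push a s).
Proof.
case: s => [|b t] //= H.
case: ifP => [_|Hb]; first exact: reducedb_tail H.
by rewrite /= Hb H.
Qed.

Lemma reduce_reduced w : reducedb (reduce w).
Proof. by elim: w => [|a w IH] //=; apply: push_reduced. Qed.

Definition FG := {w : word | reducedb w}.

Definition FG1 : FG := exist _ [::] isT.
Definition FGmul (u v : FG) : FG :=
  exist _ (reduce (proj1_sig u ++ proj1_sig v)) (reduce_reduced _).
Definition FGinv (u : FG) : FG :=
  exist _ (reduce (rev (map inv_letter (proj1_sig u)))) (reduce_reduced _).
Definition FGpow (u : FG) (n : nat) : FG := iter n (FGmul u) FG1.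

Definition gx : FG := exist _ [:: (false, false)] isT.
Definition gy : FG := exist _ [:: (true, false)] isT.

Definition is_aut (phi : FG -> FG) : Prop :=
  (forall u v, phi (FGmul u v) = FGmul (phi u) (phi v)) /\ bijective phi.

Definition AK1 : FG :=
  FGmul gx (FGmul gy (FGmul gx (FGmul (FGinv gy) (FGmul (FGinv gx) (FGinv gy))))).
Definition AK2 (n : nat) : FG := FGmul (FGpow gx n) (FGinv (FGpow gy n.+1)).

Inductive ACmove : FG * FG -> FG * FG -> Prop :=
| AC_mul12 r1 r2 : ACmove (r1, r2) (FGmul r1 r2, r2)
| AC_mul21 r1 r2 : ACmove (r1, r2) (r1, FGmul r2 r1)
| AC_inv1 r1 r2 : ACmove (r1, r2) (FGinv r1, r2)
| AC_inv2 r1 r2 : ACmove (r1, r2) (r1, FGinv r2)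
| AC_conj1 r1 r2 w : ACmove (r1, r2) (FGmul (FGinv w) (FGmul r1 w), r2)
| AC_conj2 r1 r2 w : ACmove (r1, r2) (r1, FGmul (FGinv w) (FGmul r2 w)).

Definition AC_equiv : FG * FG -> FG * FG -> Prop := clos_refl_trans _ ACmove.

(* Main.v *)
Require Import Defs.
From mathcomp Require Import all_boot zify.
From Stdlib Require Import Relations Setoid Morphisms Lia Classical.
Set Implicit Arguments. Unset Strict Implicit. Unset Printing Implicit Defensive.


Arguments inv_letter : simpl never.
Lemma inv_letterK (a : letter) : inv_letter (inv_letter a) = a.
Proof. by case: a => g s; rewrite /inv_letter /= negbK. Qed.

Lemma inv_letter_neq (a : letter) : inv_letter a != a.
Proof. by case: a => g [] ; rewrite /inv_letter /= xpair_eqE eqxx /=. Qed.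

Lemma inv_letter_inj : injective inv_letter.
Proof. by move=> a b H; rewrite -(inv_letterK a) H inv_letterK. Qed.

Definition winv (w : word) : word := rev (map inv_letter w).

Lemma winvK w : winv (winv w) = w.
Proof. by rewrite /winv map_rev revK -map_comp (eq_map inv_letterK) map_id. Qed.

Lemma winv_cat u v : winv (u ++ v) = winv v ++ winv u.
Proof. by rewrite /winv map_cat rev_cat. Qed.

Lemma size_winv w : size (winv w) = size w.
Proof. by rewrite /winv size_rev size_map. Qed.

Lemma reducedb_cons a s :
  reducedb (a :: s) = (if s is b :: _ then b != inv_letter a else true) && reducedb s.
Proof. by case: s. Qed.

Lemma push_id a s : reducedb (a :: s) -> push a s = a :: s.
Proof.
case: s => [|b t] //= /andP[H _].
by rewrite (negbTE H).
Qed.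

Lemma reduce_id w : reducedb w -> reduce w = w.
Proof.
elim: w => [|a w IH] //= H.
by rewrite IH ?(reducedb_tail H) // push_id.
Qed.

Lemma push_pushK a r : reducedb r -> push a (push (inv_letter a) r) = r.
Proof.
case: r => [|b r] /=.
  by rewrite eqxx.
move=> Hr.
case: ifP => [/eqP Hb|Hb].
  move: Hr; rewrite inv_letterK in Hb; subst b.
  case: r => [|c r] //=.
  by case/andP => /negbTE ->.
by rewrite /= eqxx.
Qed.

Lemma foldr_push_reduced t s : reducedb t -> reducedb (foldr push t s).
Proof. by move=> Ht; elim: s => [|a s IH] //=; apply: push_reduced. Qed.

Lemma foldr_push_push t a s : reducedb t ->
  foldr push t (push a s) = push a (foldr push t s).
Proof.
move=> Ht.
case: s => [|b s] //=.
case: ifP => [/eqP Hb|Hb] //=.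
subst b.
by rewrite push_pushK // foldr_push_reduced.
Qed.

Lemma reduce_cat u v : reduce (u ++ v) = foldr push (reduce v) u.
Proof. by rewrite /reduce foldr_cat. Qed.

Lemma foldr_push_reduce t u : reducedb t ->
  foldr push t (reduce u) = foldr push t u.
Proof.
move=> Ht; elim: u => [|a u IH] //=.
by rewrite foldr_push_push // IH.
Qed.

Lemma reduce_reduce_l u v : reduce (reduce u ++ v) = reduce (u ++ v).
Proof. by rewrite !reduce_cat foldr_push_reduce // reduce_reduced. Qed.

Lemma reduce_reduce_r u v : reduce (u ++ reduce v) = reduce (u ++ v).
Proof. by rewrite !reduce_cat reduce_id // reduce_reduced. Qed.

Lemma reduce_idem w : reduce (reduce w) = reduce w.
Proof. by rewrite reduce_id // reduce_reduced. Qed.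

Lemma reduce_winv_l u : reduce (winv u ++ u) = [::].
Proof.
elim: u => [|a u IH] //=.
rewrite /winv /= rev_cons -cats1 -catA /=.
have E : reduce [:: inv_letter a, a & u] = reduce u.
  rewrite /reduce /= -{2}(inv_letterK a) push_pushK //.
  exact: reduce_reduced.
by rewrite -reduce_reduce_r E reduce_reduce_r.
Qed.

Lemma reduce_winv_r u : reduce (u ++ winv u) = [::].
Proof. by rewrite -{1}(winvK u) reduce_winv_l. Qed.

Lemma reducedb_rcons u c : reducedb (rcons u c) =
  reducedb u && (if u is d :: u' then c != inv_letter (last d u') else true).
Proof.
elim: u => [|d u IH] //=.
case: u IH => [|e u] /= IH.
  by rewrite andbT.
by rewrite IH andbA.
Qed.

Lemma reducedb_cat u v : reducedb (u ++ v) -> reducedb u /\ reducedb v.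
Proof.
elim: u => [|a u IH] //= H.
have [H1 H2] := IH (reducedb_tail H).
split=> //.
move: H H1; case: u {IH} => [|b u] //=.
by case/andP=> -> _ ->.
Qed.

Lemma reducedb_winv w : reducedb w -> reducedb (winv w).
Proof.
elim: w => [|a w IH] //= H.
rewrite /winv /= rev_cons.
rewrite reducedb_rcons.
have -> : reducedb (rev (map inv_letter w)) by apply: IH; exact: reducedb_tail H.
move: H; case: w {IH} => [|b w] //= /andP[Hb _].
rewrite /winv -/(winv _) .
have -> : rev (map inv_letter (b :: w)) = rcons (winv w) (inv_letter b)
  by rewrite /winv /= rev_cons.
have Hb' : inv_letter a != inv_letter (inv_letter b).
  rewrite (inj_eq inv_letter_inj); apply: contra Hb => /eqP ->.
  by rewrite inv_letterK.
by case: (winv w) => [|d u] /=; rewrite ?last_rcons.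
Qed.

Definition mk (w : word) : FG := exist _ (reduce w) (reduce_reduced w).
Notation "u ** v" := (FGmul u v) (at level 40, left associativity).
Notation "u ^-1" := (FGinv u).

Lemma FGeq (u v : FG) : proj1_sig u = proj1_sig v -> u = v.
Proof. exact: val_inj. Qed.

Lemma mk_val (u : FG) : mk (proj1_sig u) = u.
Proof. by apply: FGeq; rewrite /= reduce_id //; case: u. Qed.

Lemma val_mk w : reducedb w -> proj1_sig (mk w) = w.
Proof. by move=> H; rewrite /= reduce_id. Qed.

Lemma mk_cat u v : mk (u ++ v) = mk u ** mk v.
Proof. by apply: FGeq; rewrite /= reduce_reduce_l reduce_reduce_r. Qed.

Lemma mulA (u v w : FG) : (u ** v) ** w = u ** (v ** w).
Proof.
apply: FGeq => /=.
by rewrite reduce_reduce_l reduce_reduce_r catA.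
Qed.

Lemma mul1g (u : FG) : FG1 ** u = u.
Proof. by rewrite -(mk_val u); apply: FGeq; rewrite /= reduce_idem. Qed.

Lemma mulg1 (u : FG) : u ** FG1 = u.
Proof. by rewrite -(mk_val u); apply: FGeq; rewrite /= cats0 reduce_idem. Qed.

Lemma mulVg (u : FG) : u^-1 ** u = FG1.
Proof.
apply: FGeq => /=.
by rewrite reduce_reduce_l reduce_winv_l.
Qed.

Lemma mulgV (u : FG) : u ** u^-1 = FG1.
Proof.
apply: FGeq => /=.
by rewrite reduce_reduce_r reduce_winv_r.
Qed.

Lemma mulKg (u v : FG) : u^-1 ** (u ** v) = v.
Proof. by rewrite -mulA mulVg mul1g. Qed.
Lemma mulKVg (u v : FG) : u ** (u^-1 ** v) = v.
Proof. by rewrite -mulA mulgV mul1g. Qed.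
Lemma mulgK (u v : FG) : (v ** u) ** u^-1 = v.
Proof. by rewrite mulA mulgV mulg1. Qed.
Lemma mulgKV (u v : FG) : (v ** u^-1) ** u = v.
Proof. by rewrite mulA mulVg mulg1. Qed.

Lemma inv_uniq (u v : FG) : u ** v = FG1 -> v = u^-1.
Proof. by move=> H; rewrite -(mulKg u v) H mulg1. Qed.

Lemma inv_uniql (u v : FG) : v ** u = FG1 -> v = u^-1.
Proof. by move=> H; rewrite -(mulgK u v) H mul1g. Qed.

Lemma mk_winv w : mk (winv w) = (mk w)^-1.
Proof.
apply: inv_uniql; rewrite -mk_cat; apply: FGeq.
by rewrite /= reduce_winv_l.
Qed.

Lemma invK (u : FG) : (u^-1)^-1 = u.
Proof. by symmetry; apply: inv_uniq; rewrite mulVg. Qed.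

Lemma invM (u v : FG) : (u ** v)^-1 = v^-1 ** u^-1.
Proof.
symmetry; apply: inv_uniq.
by rewrite mulA mulKVg mulgV.
Qed.

Lemma inv1 : FG1^-1 = FG1.
Proof. by apply: FGeq. Qed.

Lemma mulI (u v w : FG) : u ** v = u ** w -> v = w.
Proof. by move=> H; rewrite -(mulKg u v) H mulKg. Qed.
Lemma mulIr (u v w : FG) : v ** u = w ** u -> v = w.
Proof. by move=> H; rewrite -(mulgK u v) H mulgK. Qed.

Lemma FGpowS u n : FGpow u n.+1 = u ** FGpow u n.
Proof. by []. Qed.
Lemma FGpow0 u : FGpow u 0 = FG1.
Proof. by []. Qed.

Lemma FGpowD u m n : FGpow u (m + n) = FGpow u m ** FGpow u n.
Proof.
elim: m => [|m IH]; first by rewrite add0n FGpow0 mul1g.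
by rewrite addSn !FGpowS IH mulA.
Qed.

Lemma FGpowSr u n : FGpow u n.+1 = FGpow u n ** u.
Proof. by rewrite -addn1 FGpowD /= mulg1. Qed.

Lemma FGpow_conj w u n : FGpow (w ** u ** w^-1) n = w ** FGpow u n ** w^-1.
Proof.
elim: n => [|n IH]; first by rewrite !FGpow0 mulg1 mulgV.
rewrite !FGpowS IH.
by rewrite !mulA mulKg.
Qed.

Lemma FGpow_inv u n : FGpow (u^-1) n = (FGpow u n)^-1.
Proof.
elim: n => [|n IH]; first by rewrite !FGpow0 inv1.
by rewrite FGpowS FGpowSr IH invM.
Qed.

Definition imgFG (A B : FG) (l : letter) : FG :=
  let g := if l.1 then B else A in if l.2 then g^-1 else g.
Definition substW (A B : FG) (w : word) : FG :=
  foldr (fun l acc => imgFG A B l ** acc) FG1 w.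
Definition subst (A B : FG) (u : FG) : FG := substW A B (proj1_sig u).

Definition ishom (f : FG -> FG) := forall u v, f (u ** v) = f u ** f v.

Lemma img_inv A B l : imgFG A B (inv_letter l) = (imgFG A B l)^-1.
Proof. by case: l => g [] /=; rewrite /imgFG /inv_letter /= ?invK. Qed.

Lemma substW_cat A B u v : substW A B (u ++ v) = substW A B u ** substW A B v.
Proof.
elim: u => [|a u IH] /=; first by rewrite mul1g.
by rewrite IH mulA.
Qed.

Lemma substW_push A B a s : substW A B (push a s) = imgFG A B a ** substW A B s.
Proof.
case: s => [|b s] //=.
case: ifP => [/eqP ->|_] //=.
by rewrite img_inv mulKVg.
Qed.

Lemma substW_reduce A B w : substW A B (reduce w) = substW A B w.
Proof. by elim: w => [|a w IH] //=; rewrite substW_push IH. Qed.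

Lemma subst_mk A B w : subst A B (mk w) = substW A B w.
Proof. by rewrite /subst /= substW_reduce. Qed.

Lemma subst_mul A B u v : subst A B (u ** v) = subst A B u ** subst A B v.
Proof. by rewrite /FGmul -/(mk _) subst_mk substW_cat. Qed.

Lemma subst_hom A B : ishom (subst A B).
Proof. exact: subst_mul. Qed.

Lemma hom1 f : ishom f -> f FG1 = FG1.
Proof.
move=> Hf; have := Hf FG1 FG1; rewrite mul1g => H.
by apply: (@mulI (f FG1)); rewrite -H mulg1.
Qed.

Lemma hom_inv f u : ishom f -> f (u^-1) = (f u)^-1.
Proof.
move=> Hf; apply: inv_uniql; rewrite -Hf mulVg; exact: hom1.
Qed.

Lemma hom_img f A B l : ishom f -> f (imgFG A B l) = imgFG (f A) (f B) l.
Proof.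
move=> Hf; case: l => g [] /=; rewrite /imgFG /=; case: g => //; exact: hom_inv.
Qed.

Lemma hom_substW f A B w : ishom f -> f (substW A B w) = substW (f A) (f B) w.
Proof.
move=> Hf; elim: w => [|a w IH] /=; first exact: hom1.
by rewrite Hf IH hom_img.
Qed.

Lemma substW_letters w : substW gx gy w = mk w.
Proof.
elim: w => [|a w IH]; first by apply: FGeq.
rewrite /= IH -[a :: w]/([:: a] ++ w) mk_cat; congr (_ ** _).
by case: a => [[] []]; apply: FGeq; vm_compute.
Qed.

Lemma subst_id u : subst gx gy u = u.
Proof. by rewrite /subst substW_letters mk_val. Qed.

Lemma hom_subst f u : ishom f -> f u = subst (f gx) (f gy) u.
Proof. by move=> Hf; rewrite -{1}(subst_id u); exact: (hom_substW gx gy (proj1_sig u) Hf). Qed.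

Lemma subst_comp A B C D u :
  subst A B (subst C D u) = subst (subst A B C) (subst A B D) u.
Proof. exact: (hom_substW C D (proj1_sig u) (subst_hom A B)). Qed.

Lemma subst_gx A B : subst A B gx = A.
Proof. by rewrite /subst /= /imgFG /= mulg1. Qed.
Lemma subst_gy A B : subst A B gy = B.
Proof. by rewrite /subst /= /imgFG /= mulg1. Qed.

Lemma subst_inv A B u : subst A B (u^-1) = (subst A B u)^-1.
Proof. apply: hom_inv; exact: subst_hom. Qed.

Lemma subst_pow A B u n : subst A B (FGpow u n) = FGpow (subst A B u) n.
Proof.
elim: n => [|n IH]; first exact: (hom1 (subst_hom A B)).
by rewrite !FGpowS subst_mul IH.
Qed.

Lemma conj_hom w : ishom (fun u => w^-1 ** u ** w).
Proof. by move=> u v; rewrite !mulA mulKVg. Qed.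

Lemma subst_conj A B w u :
  subst (w^-1 ** A ** w) (w^-1 ** B ** w) u = w^-1 ** subst A B u ** w.
Proof. by symmetry; exact: (hom_substW A B (proj1_sig u) (conj_hom w)). Qed.

Lemma FGpow_comm u n : FGpow u n ** u = u ** FGpow u n.
Proof. by rewrite -FGpowSr FGpowS. Qed.

Lemma FGpow_commK u n v : (FGpow u n)^-1 ** (u ** (FGpow u n ** v)) = u ** v.
Proof. by rewrite -[u ** (FGpow u n ** v)]mulA -FGpow_comm mulA mulKg. Qed.

Lemma FGpow_commV u n : u ** ((FGpow u n)^-1 ** u^-1) = (FGpow u n)^-1.
Proof. by rewrite -invM -FGpow_comm invM mulKVg. Qed.


Lemma AC_refl p : AC_equiv p p.
Proof. exact: rt_refl. Qed.
Lemma AC_trans p q s : AC_equiv p q -> AC_equiv q s -> AC_equiv p s.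
Proof. exact: rt_trans. Qed.
Lemma AC_step p q : ACmove p q -> AC_equiv p q.
Proof. exact: rt_step. Qed.

Lemma AC_mul12 r1 r2 : AC_equiv (r1, r2) (r1 ** r2, r2).
Proof. apply: AC_step; constructor. Qed.
Lemma AC_mul21 r1 r2 : AC_equiv (r1, r2) (r1, r2 ** r1).
Proof. apply: AC_step; constructor. Qed.
Lemma AC_inv1 r1 r2 : AC_equiv (r1, r2) (r1^-1, r2).
Proof. apply: AC_step; constructor. Qed.
Lemma AC_inv2 r1 r2 : AC_equiv (r1, r2) (r1, r2^-1).
Proof. apply: AC_step; constructor. Qed.
Lemma AC_conj1 r1 r2 w : AC_equiv (r1, r2) (w^-1 ** r1 ** w, r2).
Proof. rewrite mulA; apply: AC_step; constructor. Qed.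
Lemma AC_conj2 r1 r2 w : AC_equiv (r1, r2) (r1, w^-1 ** r2 ** w).
Proof. rewrite mulA; apply: AC_step; constructor. Qed.

Lemma AC_inv1' r1 r2 : AC_equiv (r1^-1, r2) (r1, r2).
Proof. by rewrite -{2}(invK r1); exact: AC_inv1. Qed.
Lemma AC_inv2' r1 r2 : AC_equiv (r1, r2^-1) (r1, r2).
Proof. by rewrite -{2}(invK r2); exact: AC_inv2. Qed.
Lemma AC_conj1' r1 r2 w : AC_equiv (w^-1 ** r1 ** w, r2) (r1, r2).
Proof.
have := AC_conj1 (w^-1 ** r1 ** w) r2 (w^-1).
by rewrite invK !mulA mulKVg mulgV mulg1.
Qed.
Lemma AC_conj2' r1 r2 w : AC_equiv (r1, w^-1 ** r2 ** w) (r1, r2).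
Proof.
have := AC_conj2 r1 (w^-1 ** r2 ** w) (w^-1).
by rewrite invK !mulA mulKVg mulgV mulg1.
Qed.

Lemma AC_mul12' r1 r2 : AC_equiv (r1 ** r2, r2) (r1, r2).
Proof.
apply: AC_trans (AC_inv2 _ _) _.
apply: AC_trans (AC_mul12 _ _) _.
rewrite mulgK; exact: AC_inv2'.
Qed.
Lemma AC_mul21' r1 r2 : AC_equiv (r1, r2 ** r1) (r1, r2).
Proof.
apply: AC_trans (AC_inv1 _ _) _.
apply: AC_trans (AC_mul21 _ _) _.
rewrite mulgK; exact: AC_inv1'.
Qed.

Lemma ACmove_sym p q : ACmove p q -> AC_equiv q p.
Proof.
case=> r1 r2 *.
- exact: AC_mul12'.
- exact: AC_mul21'.
- exact: AC_inv1'.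
- exact: AC_inv2'.
- rewrite -mulA; exact: AC_conj1'.
- rewrite -mulA; exact: AC_conj2'.
Qed.

Lemma AC_sym p q : AC_equiv p q -> AC_equiv q p.
Proof.
elim=> [p' q' H|p'|p' q' s _ H1 _ H2].
- exact: ACmove_sym.
- exact: AC_refl.
- exact: AC_trans H2 H1.
Qed.

Definition pmap (f : FG -> FG) (p : FG * FG) := (f p.1, f p.2).

Lemma AC_hom f p q : ishom f -> AC_equiv p q -> AC_equiv (pmap f p) (pmap f q).
Proof.
move=> Hf; elim=> [p' q' H|p'|p' q' s _ H1 _ H2].
- case: H => r1 r2 *; apply: AC_step; rewrite /pmap /= ?Hf ?hom_inv //; constructor.
- exact: AC_refl.
- exact: AC_trans H1 H2.
Qed.

Inductive NC (r : FG) : FG -> Prop :=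
| NC1 : NC r FG1
| NCp k w : NC r k -> NC r (k ** (w^-1 ** r ** w))
| NCn k w : NC r k -> NC r (k ** (w^-1 ** r^-1 ** w)).

Lemma AC_NC2 r1 r2 k : NC r1 k -> AC_equiv (r1, r2) (r1, r2 ** k).
Proof.
elim=> [|k' w _ IH|k' w _ IH]; first by rewrite mulg1; exact: AC_refl.
- apply: AC_trans IH _.
  apply: AC_trans (AC_conj1 _ _ w) _.
  apply: AC_trans (AC_mul21 _ _) _.
  rewrite -[r2 ** (k' ** _)]mulA; exact: AC_conj1'.
- apply: AC_trans IH _.
  apply: AC_trans (AC_inv1 _ _) _.
  apply: AC_trans (AC_conj1 _ _ w) _.
  apply: AC_trans (AC_mul21 _ _) _.
  apply: AC_trans (AC_conj1' _ _ w) _.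
  rewrite -[r2 ** (k' ** _)]mulA; exact: AC_inv1'.
Qed.

Lemma AC_NC1 r1 r2 k : NC r2 k -> AC_equiv (r1, r2) (r1 ** k, r2).
Proof.
elim=> [|k' w _ IH|k' w _ IH]; first by rewrite mulg1; exact: AC_refl.
- apply: AC_trans IH _.
  apply: AC_trans (AC_conj2 _ _ w) _.
  apply: AC_trans (AC_mul12 _ _) _.
  rewrite -[r1 ** (k' ** _)]mulA; exact: AC_conj2'.
- apply: AC_trans IH _.
  apply: AC_trans (AC_inv2 _ _) _.
  apply: AC_trans (AC_conj2 _ _ w) _.
  apply: AC_trans (AC_mul12 _ _) _.
  apply: AC_trans (AC_conj2' _ _ w) _.
  rewrite -[r1 ** (k' ** _)]mulA; exact: AC_inv2'.
Qed.

Lemma NC_mul r k k' : NC r k -> NC r k' -> NC r (k ** k').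
Proof.
move=> Hk; elim=> [|k'' w _ IH|k'' w _ IH]; first by rewrite mulg1.
- rewrite -mulA; exact: NCp.
- rewrite -mulA; exact: NCn.
Qed.

Lemma NC_conj r k w : NC r k -> NC r (w^-1 ** k ** w).
Proof.
elim=> [|k' v _ IH|k' v _ IH].
- by rewrite mulg1 mulVg; exact: NC1.
- have -> : w^-1 ** (k' ** (v^-1 ** r ** v)) ** w =
            (w^-1 ** k' ** w) ** ((v ** w)^-1 ** r ** (v ** w)).
    by rewrite invM !mulA mulKVg.
  exact: NCp.
- have -> : w^-1 ** (k' ** (v^-1 ** r^-1 ** v)) ** w =
            (w^-1 ** k' ** w) ** ((v ** w)^-1 ** r^-1 ** (v ** w)).
    by rewrite invM !mulA mulKVg.
  exact: NCn.
Qed.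

Lemma NC_inv r k : NC r k -> NC r (k^-1).
Proof.
elim=> [|k' v _ IH|k' v _ IH].
- by rewrite inv1; exact: NC1.
- rewrite invM; apply: NC_mul => //.
  have -> : (v^-1 ** r ** v)^-1 = FG1 ** (v^-1 ** r^-1 ** v) by rewrite mul1g !invM invK mulA.
  by apply: NCn; exact: NC1.
- rewrite invM; apply: NC_mul => //.
  have -> : (v^-1 ** r^-1 ** v)^-1 = FG1 ** (v^-1 ** r ** v) by rewrite mul1g !invM !invK mulA.
  by apply: NCp; exact: NC1.
Qed.

Lemma NC_r r : NC r r.
Proof.
have := NCp FG1 (NC1 r); by rewrite inv1 mul1g mulg1 mul1g.
Qed.

Definition cong (r : FG) (u v : FG) : Prop := exists k, NC r k /\ v = u ** k.

Lemma cong_refl r u : cong r u u.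
Proof. exists FG1; split; [exact: NC1 | by rewrite mulg1]. Qed.
Lemma cong_sym r u v : cong r u v -> cong r v u.
Proof.
case=> k [Hk ->]; exists k^-1; split; [exact: NC_inv | by rewrite mulgK].
Qed.
Lemma cong_trans r u v w : cong r u v -> cong r v w -> cong r u w.
Proof.
case=> k [Hk ->] [k' [Hk' ->]]; exists (k ** k'); split; [exact: NC_mul | by rewrite mulA].
Qed.

#[export] Instance cong_Equiv r : Equivalence (cong r).
Proof. split; [exact: cong_refl | exact: cong_sym | exact: cong_trans]. Qed.

#[export] Instance mul_Proper r : Proper (cong r ==> cong r ==> cong r) FGmul.
Proof.
move=> u u' [k [Hk ->]] v v' [k' [Hk' ->]].
exists ((v^-1 ** k ** v) ** k'); split.
  apply: NC_mul => //; exact: NC_conj.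
by rewrite !mulA mulKVg.
Qed.

#[export] Instance inv_Proper r : Proper (cong r ==> cong r) FGinv.
Proof.
move=> u u' [k [Hk ->]].
exists (u ** k^-1 ** u^-1); split.
  by have := NC_conj (u^-1) (NC_inv Hk); rewrite invK.
by rewrite invM !mulA mulKg.
Qed.

#[export] Instance pow_Proper r : Proper (cong r ==> eq ==> cong r) FGpow.
Proof.
move=> u u' H n _ <-.
elim: n => [|n IH]; first by reflexivity.
by rewrite !FGpowS; apply: (mul_Proper H IH).
Qed.

Lemma cong_r1 r : cong r r FG1.
Proof. exists r^-1; split; [exact: NC_inv (NC_r r) | by rewrite mulgV]. Qed.

Lemma AC_cong2 r1 r2 r2' : cong r1 r2 r2' -> AC_equiv (r1, r2) (r1, r2').
Proof. by case=> k [Hk ->]; exact: AC_NC2. Qed.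
Lemma AC_cong1 r1 r2 r1' : cong r2 r1 r1' -> AC_equiv (r1, r2) (r1', r2).
Proof. by case=> k [Hk ->]; exact: AC_NC1. Qed.

Lemma cong_drop r u v : cong r (u ** r ** v) (u ** v).
Proof.
exists (v^-1 ** r^-1 ** v); split; first exact: NC_conj (NC_inv (NC_r r)).
by rewrite !mulA mulKVg mulKVg.
Qed.

Lemma cong_dropi r u v : cong r (u ** r^-1 ** v) (u ** v).
Proof.
exists (v^-1 ** r ** v); split; first exact: NC_conj (NC_r r).
by rewrite !mulA mulKVg mulKg.
Qed.


Ltac gsimpl := rewrite ?invM ?invK ?mulA ?mulKg ?mulKVg ?mulgV ?mulVg ?mulg1 ?mul1g ?inv1.
Ltac gcomp := apply: FGeq; vm_compute; exact: erefl.

Definition goodpair n A B :=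
  AC_equiv (subst A B AK1, subst A B (AK2 n)) (AK1, AK2 n).

Lemma subst_AK2 A B n : subst A B (AK2 n) = FGpow A n ** (FGpow B n.+1)^-1.
Proof. by rewrite /AK2 subst_mul subst_inv !subst_pow subst_gx subst_gy. Qed.

Lemma gp_id n : goodpair n gx gy.
Proof. rewrite /goodpair !subst_id; exact: AC_refl. Qed.

Lemma gp_comp n A B C D : goodpair n A B -> goodpair n C D ->
  goodpair n (subst A B C) (subst A B D).
Proof.
move=> HAB HCD; rewrite /goodpair -!subst_comp.
apply: AC_trans HAB.
exact: (AC_hom (subst_hom A B) HCD).
Qed.

Lemma gp_inverse n C D C' D' : goodpair n C D ->
  subst C' D' C = gx -> subst C' D' D = gy -> goodpair n C' D'.
Proof.
move=> H E1 E2; apply: AC_sym.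
have := AC_hom (subst_hom C' D') H; rewrite /pmap /= !subst_comp E1 E2 !subst_id.
by [].
Qed.

Lemma gp_conj n A B w : goodpair n A B ->
  goodpair n (w^-1 ** A ** w) (w^-1 ** B ** w).
Proof.
move=> H; rewrite /goodpair !subst_conj.
apply: AC_trans H.
apply: AC_trans (AC_conj1' _ _ w) _.
exact: AC_conj2'.
Qed.

Lemma gp_conj' n A B w : goodpair n (w^-1 ** A ** w) (w^-1 ** B ** w) -> goodpair n A B.
Proof.
move=> H; have := gp_conj (w^-1) H.
by rewrite invK !mulA !mulKVg !mulgV !mulg1.
Qed.

Definition Dl := gx ** gy ** gx.



Lemma gp_P n : goodpair n gy gx.
Proof.
apply: AC_sym; rewrite /goodpair subst_AK2.
have -> : subst gy gx AK1 = AK1^-1 by gcomp.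
apply: AC_trans (AC_conj2 _ _ (Dl^-1)) _; rewrite invK.
apply: AC_trans _ (AC_inv1 _ _).
apply: AC_cong2.
have E1 : cong AK1 (Dl ** gx ** Dl^-1) gy.
  have -> : Dl ** gx ** Dl^-1 = AK1 ** gy by gcomp.
  by have := cong_drop AK1 FG1 gy; rewrite !mul1g.
have E2 : cong AK1 (Dl ** gy ** Dl^-1) gx.
  have -> : Dl ** gy ** Dl^-1 = gx ** AK1^-1 by gcomp.
  by have := cong_dropi AK1 gx FG1; rewrite !mulg1.
have -> : Dl ** AK2 n ** Dl^-1 =
  FGpow (Dl ** gx ** Dl^-1) n ** (FGpow (Dl ** gy ** Dl^-1) n.+1)^-1.
  by rewrite !FGpow_conj /AK2; gsimpl.
by rewrite E1 E2; reflexivity.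
Qed.

Lemma gp_I n : goodpair n (gx^-1) (gy^-1).
Proof.
apply: AC_sym; rewrite /goodpair subst_AK2 !FGpow_inv invK.
have -> : subst (gx^-1) (gy^-1) AK1 = Dl^-1 ** AK1^-1 ** Dl by gcomp.
apply: AC_trans (AC_inv1 _ _) _.
apply: AC_trans (AC_conj1 _ _ Dl) _.
apply: AC_trans (AC_inv2 _ _) _.
have := AC_conj2 (Dl^-1 ** AK1^-1 ** Dl) (AK2 n)^-1 (FGpow gx n).
by rewrite /AK2; gsimpl.
Qed.

Definition tt := gx ** gy.
Definition Ast := gx ** tt ** gx ** tt^-1 ** gx^-1 ** tt^-1.
Definition BB n := FGpow gx n ** tt ** (gx ** FGpow gx n)^-1 ** tt^-1.

Lemma alpha_step1 n : AC_equiv (AK1, AK2 n) (AK1, BB n).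
Proof.
apply: AC_cong2.
have hy : cong AK1 gy (tt ** gx ** tt^-1).
  have -> : tt ** gx ** tt^-1 = FG1 ** AK1 ** gy by gcomp.
  by symmetry; have := cong_drop AK1 FG1 gy; rewrite !mul1g.
rewrite /AK2 hy FGpow_conj /BB FGpowS; gsimpl; exact: cong_refl.
Qed.

Lemma alpha_step2 n : AC_equiv (AK1, BB n) (Ast, BB n).
Proof.
pose X := FGpow gx n.
pose c0 := tt^-1 ** tt^-1 ** gx ** tt ** gx.
pose c1 := tt^-1 ** (gx ** X)^-1 ** tt^-1 ** (gx ** X) ** tt ** gx.
pose w1 := tt^-1 ** X^-1.
pose c2 := tt^-1 ** gx^-1 ** tt^-1 ** gx ** X ** tt ** X^-1.
pose c3 := tt^-1 ** gx^-1 ** tt^-1 ** gx ** tt ** gx.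
pose w3 := tt^-1 ** gx^-1 ** tt^-1.
have hB1 : cong (BB n) (tt ** (gx ** X)^-1 ** tt^-1) X^-1.
  have -> : tt ** (gx ** X)^-1 ** tt^-1 = X^-1 ** BB n ** FG1 by rewrite /BB; gsimpl.
  by have := cong_drop (BB n) (X^-1) FG1; rewrite !mulg1.
have hB2 : cong (BB n) (X ** tt ** X^-1) (tt ** gx).
  have -> : X ** tt ** X^-1 = FG1 ** BB n ** (tt ** gx) by rewrite /BB; gsimpl.
  by have := cong_drop (BB n) FG1 (tt ** gx); rewrite !mul1g.
apply: AC_trans (AC_conj1 _ _ (tt ** gx)) _.
have -> : (tt ** gx)^-1 ** AK1 ** (tt ** gx) = c0 by gcomp.
apply: AC_trans (_ : AC_equiv (c0, BB n) (c1, BB n)) _.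
  apply: AC_cong1.
  have -> : c1 = tt^-1 ** tt^-1 ** (tt ** (gx ** X)^-1 ** tt^-1) ** (gx ** X) ** tt ** gx.
    by rewrite /c1; gsimpl.
  rewrite hB1 /c0; gsimpl. rewrite FGpow_commK. exact: cong_refl.
apply: AC_trans (AC_conj1 _ _ w1) _.
apply: AC_trans (AC_mul12 _ _) _.
apply: AC_trans (AC_conj1 _ _ tt) _.
have -> : tt^-1 ** (w1^-1 ** c1 ** w1 ** BB n) ** tt = c2.
  rewrite /w1 /c1 /c2 /BB; gsimpl; rewrite -/X.
  by rewrite FGpow_commV.
apply: AC_trans (_ : AC_equiv (c2, BB n) (c3, BB n)) _.
  apply: AC_cong1.
  have -> : c2 = tt^-1 ** gx^-1 ** tt^-1 ** gx ** (X ** tt ** X^-1) by rewrite /c2; gsimpl.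
  rewrite hB2 /c3; gsimpl; exact: cong_refl.
apply: AC_trans (AC_conj1 _ _ w3) _.
have -> : w3^-1 ** c3 ** w3 = Ast by gcomp.
exact: AC_refl.
Qed.

Lemma alpha_step3 n :
  AC_equiv (Ast, BB n) (Ast, FGpow gx n ** (FGpow tt n.+1)^-1).
Proof.
apply: AC_trans (AC_conj2 _ _ (gx^-1)) _; rewrite invK.
apply: AC_cong2.
have ht : cong Ast tt ((gx ** tt) ** gx ** (gx ** tt)^-1).
  have -> : (gx ** tt) ** gx ** (gx ** tt)^-1 = FG1 ** Ast ** tt by gcomp.
  by symmetry; have := cong_drop Ast FG1 tt; rewrite !mul1g.
rewrite ht FGpow_conj /BB !FGpowS; gsimpl.
rewrite -[gx ** (FGpow gx n ** _)]mulA -FGpow_comm mulA.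
exact: cong_refl.
Qed.

Lemma gp_A n : goodpair n gx tt.
Proof.
apply: AC_sym; rewrite /goodpair subst_AK2.
have -> : subst gx tt AK1 = Ast by gcomp.
apply: AC_trans (alpha_step1 n) _.
apply: AC_trans (alpha_step2 n) _.
exact: alpha_step3.
Qed.

Lemma gp_a n : goodpair n gx (gx^-1 ** gy).
Proof. apply: (gp_inverse (gp_A n)); gcomp. Qed.

Lemma gp_eq n A B A' B' : goodpair n A B -> A = A' -> B = B' -> goodpair n A' B'.
Proof. by move=> H <- <-. Qed.

Lemma gp_N1 n : goodpair n (gx ** gy) (gy).
Proof. apply: (gp_eq (gp_comp (gp_comp (gp_comp (gp_comp (gp_id n) (gp_P n)) (gp_A n)) (gp_P n)) (gp_conj (gy) (gp_id n)))); gcomp. Qed.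

Lemma gp_N2 n : goodpair n (gx ** gy^-1) (gy).
Proof. apply: (gp_eq (gp_comp (gp_comp (gp_comp (gp_comp (gp_id n) (gp_P n)) (gp_a n)) (gp_P n)) (gp_conj (gy^-1) (gp_id n)))); gcomp. Qed.

Lemma gp_N3 n : goodpair n (gy ** gx) (gy).
Proof. apply: (gp_eq (gp_comp (gp_comp (gp_comp (gp_id n) (gp_P n)) (gp_A n)) (gp_P n))); gcomp. Qed.

Lemma gp_N4 n : goodpair n (gy^-1 ** gx) (gy).
Proof. apply: (gp_eq (gp_comp (gp_comp (gp_comp (gp_id n) (gp_P n)) (gp_a n)) (gp_P n))); gcomp. Qed.

Lemma gp_N5 n : goodpair n (gx) (gy ** gx).
Proof. apply: (gp_eq (gp_comp (gp_comp (gp_id n) (gp_A n)) (gp_conj (gx) (gp_id n)))); gcomp. Qed.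

Lemma gp_N6 n : goodpair n (gx) (gy ** gx^-1).
Proof. apply: (gp_eq (gp_comp (gp_comp (gp_id n) (gp_a n)) (gp_conj (gx^-1) (gp_id n)))); gcomp. Qed.

Lemma gp_N7 n : goodpair n (gx) (gx ** gy).
Proof. apply: (gp_eq (gp_comp (gp_id n) (gp_A n))); gcomp. Qed.

Lemma gp_N8 n : goodpair n (gx) (gx^-1 ** gy).
Proof. apply: (gp_eq (gp_comp (gp_id n) (gp_a n))); gcomp. Qed.

Lemma gp_L1 n : goodpair n (gx) (gy).
Proof. apply: (gp_eq (gp_id n)); gcomp. Qed.

Lemma gp_L2 n : goodpair n (gx) (gy^-1).
Proof. apply: (gp_eq (gp_comp (gp_a n) (gp_comp (gp_comp (gp_comp (gp_comp (gp_comp (gp_comp (gp_id n) (gp_P n)) (gp_I n)) (gp_A n)) (gp_P n)) (gp_a n)) (gp_P n)))); gcomp. Qed.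

Lemma gp_L3 n : goodpair n (gx^-1) (gy).
Proof. apply: (gp_eq (gp_comp (gp_P n) (gp_comp (gp_a n) (gp_comp (gp_comp (gp_comp (gp_comp (gp_comp (gp_id n) (gp_P n)) (gp_I n)) (gp_A n)) (gp_P n)) (gp_a n))))); gcomp. Qed.

Lemma gp_L4 n : goodpair n (gx^-1) (gy^-1).
Proof. apply: (gp_eq (gp_comp (gp_id n) (gp_I n))); gcomp. Qed.

Lemma gp_L5 n : goodpair n (gy) (gx).
Proof. apply: (gp_eq (gp_comp (gp_id n) (gp_P n))); gcomp. Qed.

Lemma gp_L6 n : goodpair n (gy) (gx^-1).
Proof. apply: (gp_eq (gp_comp (gp_A n) (gp_comp (gp_P n) (gp_comp (gp_a n) (gp_comp (gp_comp (gp_comp (gp_id n) (gp_P n)) (gp_I n)) (gp_A n)))))); gcomp. Qed.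

Lemma gp_L7 n : goodpair n (gy^-1) (gx).
Proof. apply: (gp_eq (gp_comp (gp_a n) (gp_comp (gp_comp (gp_comp (gp_comp (gp_comp (gp_id n) (gp_P n)) (gp_I n)) (gp_A n)) (gp_P n)) (gp_a n)))); gcomp. Qed.

Lemma gp_L8 n : goodpair n (gy^-1) (gx^-1).
Proof. apply: (gp_eq (gp_comp (gp_comp (gp_id n) (gp_P n)) (gp_I n))); gcomp. Qed.


Definition dl : letter := (false, false).

Fixpoint ccl (rl v : word) : nat :=
  match rl, v with
  | a :: rl', b :: v' => if b == inv_letter a then (ccl rl' v').+1 else 0
  | _, _ => 0
  end.

Lemma ccl_le rl v : ccl rl v <= size rl /\ ccl rl v <= size v.
Proof.
elim: rl v => [|a rl IH] [|b v] //=.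
case: ifP => _ //; have [H1 H2] := IH v; by split.
Qed.

Lemma ccl_nth rl v i : i < ccl rl v -> nth dl v i = inv_letter (nth dl rl i).
Proof.
elim: rl v i => [|a rl IH] [|b v] i //=.
case: ifP => [/eqP Hb|_] //.
by case: i => [|i] //= Hi; apply: IH.
Qed.

Lemma ccl_mis rl v : ccl rl v < size rl -> ccl rl v < size v ->
  nth dl v (ccl rl v) != inv_letter (nth dl rl (ccl rl v)).
Proof.
elim: rl v => [|a rl IH] [|b v] //=.
case: ifP => [_|/negbT Hb] //=.
by move=> H1 H2; apply: IH.
Qed.

Lemma ccl_char rl v c : c <= size rl -> c <= size v ->
  (forall i, i < c -> nth dl v i = inv_letter (nth dl rl i)) ->
  (c < size rl -> c < size v -> nth dl v c != inv_letter (nth dl rl c)) ->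
  ccl rl v = c.
Proof.
elim: rl v c => [|a rl IH] [|b v] [|c] //=.
- move=> _ _ _ H; by case: ifP => // /eqP E; move: (H isT isT); rewrite E eqxx.
- move=> H1 H2 H3 H4.
  have E := H3 0 isT; rewrite /= in E; rewrite E eqxx.
  congr S; apply: IH => // i Hi; exact: (H3 i.+1 Hi).
Qed.

Lemma ccl_take_cat rl p k Z : ccl rl p < size rl -> ccl rl p < k -> k <= size p ->
  ccl rl (take k p ++ Z) = ccl rl p.
Proof.
move=> H1 H2 H3.
have [Hl1 Hl2] := ccl_le rl p.
apply: ccl_char.
- exact: Hl1.
- by rewrite size_cat size_take; case: ifP => H; apply: leq_trans (leq_addr _ _); [apply: ltnW|apply: ltnW; apply: leq_trans H2 _].
- move=> i Hi; rewrite nth_cat size_take.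
  have Hik : i < k by apply: ltn_trans Hi H2.
  have -> : i < (if k < size p then k else size p).
    by case: ifP => _ //; apply: leq_trans Hik H3.
  rewrite nth_take //; exact: ccl_nth.
- move=> _ _; rewrite nth_cat size_take.
  have -> : ccl rl p < (if k < size p then k else size p).
    by case: ifP => _ //; apply: leq_trans H2 H3.
  rewrite nth_take //; apply: ccl_mis => //; apply: leq_trans H2 H3.
Qed.

Lemma reduced_nth w i : reducedb w -> i.+1 < size w ->
  nth dl w i.+1 != inv_letter (nth dl w i).
Proof.
elim: w i => [|a w IH] i //= H.
case: i => [|i] /=.
  by case: w H IH => [|b w] //= /andP[].
move=> Hi; apply: IH => //; exact: reducedb_tail H.
Qed.

Lemma ccl_same w : reducedb w -> 0 < size w -> 2 * ccl (rev w) w < size w.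
Proof.
move=> Hw Hn.
set c := ccl (rev w) w.
have Hm : forall i, i < c -> nth dl w i = inv_letter (nth dl w (size w - i.+1)).
  move=> i Hi; rewrite (ccl_nth Hi) nth_rev //.
  have [H1 _] := ccl_le (rev w) w; rewrite size_rev in H1.
  by apply: leq_trans Hi H1.
rewrite ltnNge; apply/negP => Hc.
case: (boolP (odd (size w))) => Ho.
- pose m := (size w).-1./2.
  have Hsz : size w = m.*2.+1.
    rewrite /m; move: Ho; case: (size w) => [|k] //= Ho.
    by rewrite -{1}(odd_double_half k) (negbTE Ho) add0n.
  have Hmc : m < c.
    by rewrite -(ltn_pmul2l (isT : 0 < 2)) mul2n; apply: leq_trans Hc; rewrite Hsz.
  have := Hm m Hmc.
  have -> : size w - m.+1 = m by rewrite Hsz -addnn subSS addnK.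
  by move=> E; move: (inv_letter_neq (nth dl w m)); rewrite -E eqxx.
- pose m := (size w)./2.
  have Hsz : size w = m.*2.
    by rewrite /m -{1}(odd_double_half (size w)) (negbTE Ho) add0n.
  have Hm0 : 0 < m by move: Hn; rewrite Hsz double_gt0.
  have Hmc : m.-1 < c.
    rewrite -(ltn_pmul2l (isT : 0 < 2)) mul2n; apply: leq_trans Hc.
    by rewrite Hsz ltn_double prednK.
  have := Hm _ Hmc.
  have -> : size w - m.-1.+1 = m by rewrite prednK // Hsz -addnn addnK.
  move=> E.
  have Hr := reduced_nth (i := m.-1) Hw.
  rewrite prednK // in Hr.
  have : m < size w by rewrite Hsz -addnn -{1}(addn0 m) ltn_add2l.
  move/Hr; rewrite E inv_letterK eqxx //.
Qed.

Lemma reducedb_join u a v : reducedb (rcons u a) -> reducedb (a :: v) ->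
  reducedb (u ++ a :: v).
Proof.
elim: u => [|c u IH] //= H1 H2.
have H1' : reducedb (rcons u a) by exact: reducedb_tail H1.
have := IH H1' H2.
case: u H1 {IH H1'} => [|d u] /=.
  by case/andP => -> _ ->.
by case/andP => -> _ ->.
Qed.

Lemma take_rcons_le k u (a : letter) : k <= size u -> take k (rcons u a) = take k u.
Proof. by move=> H; rewrite -cats1 takel_cat. Qed.

Lemma reduce_cat_ccl u v : reducedb u -> reducedb v ->
  reduce (u ++ v) = take (size u - ccl (rev u) v) u ++ drop (ccl (rev u) v) v.
Proof.
elim/last_ind: u v => [|u a IH] v Hu Hv.
  by rewrite /= drop0 reduce_id.
rewrite rev_rcons cat_rcons reduce_cat /=.
have Hu' : reducedb u by have := Hu; rewrite -cats1 => /reducedb_cat [].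
rewrite reduce_id //.
case: v Hv => [|b v] Hv /=.
  have -> : [:: a] = reduce [:: a] by [].
  by rewrite -reduce_cat cats1 reduce_id // subn0 take_size cats0.
case: ifP => [/eqP Hb|Hb].
  have Hv' : reducedb v by exact: reducedb_tail Hv.
  rewrite -{1}(reduce_id Hv') -reduce_cat IH // size_rcons subSS.
  rewrite take_rcons_le //; exact: leq_subr.
rewrite subn0 take_size drop0.
have Hab : reducedb [:: a, b & v] by rewrite /= Hb.
have -> : [:: a, b & v] = reduce [:: a, b & v] by rewrite reduce_id.
rewrite -reduce_cat cat_rcons reduce_id //; exact: reducedb_join.
Qed.

Lemma reduce_size u v : reducedb u -> reducedb v ->
  size (reduce (u ++ v)) = size u + size v - 2 * ccl (rev u) v.
Proof.
move=> Hu Hv; rewrite reduce_cat_ccl // size_cat size_take size_drop.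
have [H1 H2] := ccl_le (rev u) v; rewrite size_rev in H1.
case: ifP => H; lia.
Qed.

Lemma all_push (P : pred letter) a s : P a -> all P s -> all P (push a s).
Proof.
move=> Ha; case: s => [|b s] /=; first by rewrite Ha.
by case: ifP => _ /andP[Hb Hs] //=; rewrite Ha Hb Hs.
Qed.

Lemma all_reduce (P : pred letter) w : all P w -> all P (reduce w).
Proof.
elim: w => [|a w IH] //= /andP[Ha Hw].
by apply: all_push => //; apply: IH.
Qed.

Ltac sl := repeat match goal with
  | |- context [size ?x] => let s := fresh "s" in set s := size x
  | |- context [ccl ?x ?y] => let s := fresh "c" in set s := ccl x y
  end; intros; lia.

Section Comb.
Variables A B : FG.
Definition imgw l := proj1_sig (imgFG A B l).
Definition Pw ls := proj1_sig (substW A B ls).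

Lemma imgw_red l : reducedb (imgw l).
Proof. by rewrite /imgw; case: (imgFG A B l). Qed.
Lemma Pw_red ls : reducedb (Pw ls).
Proof. by rewrite /Pw; case: (substW A B ls). Qed.
Lemma Pw_cons l ls : Pw (l :: ls) = reduce (imgw l ++ Pw ls).
Proof. by []. Qed.
Lemma Pw1 l : Pw [:: l] = imgw l.
Proof. by rewrite Pw_cons /Pw /= cats0 reduce_id // imgw_red. Qed.

Lemma gen_case (P : pred letter) g0 :
  (forall l, P l -> all (fun c : letter => c.1 == g0) (imgw l)) ->
  forall ls, all P ls -> all (fun c : letter => c.1 == g0) (Pw ls).
Proof.
move=> Himg; elim=> [|l ls IH] //= /andP[Hl Hls].
rewrite Pw_cons; apply: all_reduce; rewrite all_cat Himg //=.
exact: IH.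
Qed.

Hypothesis Hne : forall l, 0 < size (imgw l).
Hypothesis HH : forall l l', l.1 != l'.1 ->
  2 * ccl (rev (imgw l)) (imgw l') <= size (imgw l) /\
  2 * ccl (rev (imgw l)) (imgw l') <= size (imgw l').
Hypothesis HT : forall l0 l l', l != inv_letter l0 -> l' != inv_letter l ->
  2 * ccl (rev (imgw l0)) (imgw l) = size (imgw l) ->
  2 * ccl (rev (imgw l)) (imgw l') = size (imgw l) -> False.

Lemma Hgen l l' : l' != inv_letter l ->
  2 * ccl (rev (imgw l)) (imgw l') <= size (imgw l) /\
  2 * ccl (rev (imgw l)) (imgw l') <= size (imgw l').
Proof.
move=> Hl.
case: (boolP (l.1 != l'.1)) => [|/negPn/eqP Hg]; first exact: HH.
have -> : l' = l.
  move: Hl Hg; case: l => g s; case: l' => g' s' /= Hl Hg; subst g'.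
  move: Hl; rewrite /inv_letter /= xpair_eqE eqxx /=.
  by case: s; case: s'.
have := ccl_same (imgw_red l) (Hne l); lia.
Qed.

Definition okhead (l : letter) (ls : word) : bool :=
  if ls is l' :: _ then l' != inv_letter l else true.

Definition Inv l ls := exists Z d,
  Pw (l :: ls) = take (size (imgw l) - d) (imgw l) ++ Z /\
  2 * d <= size (imgw l) /\
  (if ls is l' :: _ then d = ccl (rev (imgw l)) (imgw l') else d = 0).

Lemma inv_step l0 l ls : l != inv_letter l0 ->
  okhead l ls ->
  Inv l ls -> Inv l0 (l :: ls) /\
  size (Pw (l0 :: l :: ls)) =
    size (imgw l0) + size (Pw (l :: ls)) - 2 * ccl (rev (imgw l0)) (imgw l).
Proof.
move=> Hl Hls [Z [d [EP [Hd Hw]]]].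
have [Hc1 Hc2] := Hgen Hl.
have Hp := Hne l; have Hq := Hne l0.
have Hcd : ccl (rev (imgw l0)) (imgw l) + d < size (imgw l).
  case: ls Hw Hls {EP} => [|l' ls'] Hw Hls.
    rewrite Hw; lia.
  have [Hd1 _] := Hgen Hls.
  have HN : ~ (2 * ccl (rev (imgw l0)) (imgw l) = size (imgw l) /\ 2 * d = size (imgw l)).
    by move=> [E1 E2]; apply: (HT Hl Hls E1); rewrite -Hw.
  lia.
have Ec : ccl (rev (imgw l0)) (Pw (l :: ls)) = ccl (rev (imgw l0)) (imgw l).
  rewrite EP; apply: ccl_take_cat; rewrite ?size_rev; lia.
split.
  exists (drop (ccl (rev (imgw l0)) (imgw l)) (Pw (l :: ls))).
  exists (ccl (rev (imgw l0)) (imgw l)).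
  split; last by split.
  by rewrite Pw_cons reduce_cat_ccl ?imgw_red ?Pw_red // Ec.
by rewrite Pw_cons reduce_size ?imgw_red ?Pw_red // Ec.
Qed.

Lemma inv_all ls l : reducedb (l :: ls) ->
  Inv l ls /\ size (imgw (last l ls)) <= size (Pw (l :: ls)).
Proof.
elim: ls l => [|l1 ls IH] l H.
  split; last by rewrite Pw1.
  exists [::], 0; split; last by [].
  by rewrite Pw1 subn0 take_size cats0.
move: H => /= /andP[Hl1 Hr].
have [HI Hs] := IH l1 Hr.
have Hls : okhead l1 ls.
  by case: ls Hr {IH HI Hs} => [|l2 ls] //= /andP[].
have [HI' Hs'] := inv_step (ls:=ls) Hl1 Hls HI.
split => //.
rewrite Hs'; have [Hc _] := Hgen Hl1; rewrite /= in Hs.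
move: Hc Hs; sl.
Qed.

Lemma long_case : (forall l, 1 < size (imgw l)) ->
  forall ls, reducedb ls -> ls <> [::] -> 1 < size (Pw ls).
Proof.
move=> H2 [|l ls] // Hr _.
have [_ Hs] := inv_all Hr.
exact: leq_trans (H2 _) Hs.
Qed.

Lemma short_case gs LB : 1 < LB ->
  (forall l, l.1 = gs -> size (imgw l) = 1) ->
  (forall l, l.1 != gs -> size (imgw l) = LB) ->
  forall ls, reducedb ls -> has (fun l : letter => l.1 != gs) ls -> LB <= size (Pw ls).
Proof.
move=> HLB Hs Hl.
elim=> [|l ls IH] // Hr Hhas.
case: ls Hr Hhas IH => [|l1 ls] Hr Hhas IH.
  rewrite Pw1; move: Hhas => /= /orP[H|//]; by rewrite Hl.
move: (Hr) => /= /andP[Hl1 Hr'].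
have [HI _] := inv_all Hr'.
have Hls : okhead l1 ls.
  by case: ls Hr' {IH HI Hhas Hr} => [|l2 ls] //= /andP[].
have [_ ->] := inv_step (ls:=ls) Hl1 Hls HI.
have [Hc1 Hc2] := Hgen Hl1.
case: (boolP (l.1 != gs)) => Hg.
- rewrite Hl //.
  case: (boolP (l1.1 != gs)) => Hg1.
  + have := IH Hr'; rewrite /= Hg1 => /(_ isT) HP.
    rewrite Hl // in Hc2; move: Hc2 HP; sl.
  + move: Hg1 => /negPn/eqP Hg1.
    rewrite Hs // in Hc2; move: Hc2 HLB; sl.
- move: Hg => /negPn/eqP Hg.
  have Hh : has (fun l : letter => l.1 != gs) (l1 :: ls) by move: Hhas => /=; rewrite Hg eqxx.
  have HP := IH Hr' Hh.
  rewrite Hs // in Hc1 *; move: Hc1 HP; sl.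
Qed.

End Comb.


Definition len (u : FG) := size (proj1_sig u).

Lemma sval_inv u : proj1_sig (u^-1) = winv (proj1_sig u).
Proof. by rewrite /= reduce_id //; apply: reducedb_winv; case: u. Qed.

Lemma len_inv u : len (u^-1) = len u.
Proof. by rewrite /len sval_inv size_winv. Qed.

Lemma len_mul u v : len (u ** v) =
  len u + len v - 2 * ccl (rev (proj1_sig u)) (proj1_sig v).
Proof. by rewrite /len /= reduce_size //; [case: u | case: v]. Qed.

Lemma len_mul_le u v : len (u ** v) <= len u + len v.
Proof. rewrite len_mul; lia. Qed.

Lemma len0 u : len u = 0 -> u = FG1.
Proof. by move=> H; apply: FGeq; move: H; rewrite /len; case: (proj1_sig u). Qed.

Lemma imgw_inv A B l : imgw A B (inv_letter l) = winv (imgw A B l).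
Proof. by rewrite /imgw img_inv sval_inv. Qed.

Definition basis A B := exists g h, subst A B g = gx /\ subst A B h = gy.

Lemma basis_span A B : basis A B -> forall e, exists g, subst A B g = e.
Proof.
case=> g [h [Hg Hh]] e; exists (subst g h e).
by rewrite subst_comp Hg Hh subst_id.
Qed.

Definition MoveOK n C D := exists C' D', goodpair n C' D' /\
  subst C D C' = gx /\ subst C D D' = gy.

Lemma basis_step n A B C D w : MoveOK n C D -> basis A B ->
  basis (w^-1 ** subst A B C ** w) (w^-1 ** subst A B D ** w).
Proof.
case=> C' [D' [_ [E1 E2]]] Hb.
have [e He] := basis_span Hb (w ** gx ** w^-1).
have [f Hf] := basis_span Hb (w ** gy ** w^-1).
exists (subst C' D' e), (subst C' D' f).
have K1 : subst (w^-1 ** subst A B C ** w) (w^-1 ** subst A B D ** w) C' = w^-1 ** A ** w.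
  by rewrite subst_conj -subst_comp E1 subst_gx.
have K2 : subst (w^-1 ** subst A B C ** w) (w^-1 ** subst A B D ** w) D' = w^-1 ** B ** w.
  by rewrite subst_conj -subst_comp E2 subst_gy.
rewrite !subst_comp K1 K2 !subst_conj He Hf.
by split; rewrite !mulA mulKg mulVg mulg1.
Qed.

Lemma reduce_step n A B C D w : MoveOK n C D ->
  goodpair n (w^-1 ** subst A B C ** w) (w^-1 ** subst A B D ** w) -> goodpair n A B.
Proof.
case=> C' [D' [HG [E1 E2]]] H.
have H1 := gp_conj' H.
have := gp_comp H1 HG.
by rewrite -!subst_comp E1 E2 subst_gx subst_gy.
Qed.

Lemma nth_winv (w : word) i : i < size w ->
  nth dl (winv w) i = inv_letter (nth dl w (size w - i.+1)).
Proof.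
move=> Hi; rewrite /winv nth_rev; last by rewrite size_map.
rewrite size_map (set_nth_default (inv_letter dl)) ?size_map; last by lia.
rewrite (nth_map dl) //; lia.
Qed.

Lemma tie_right (p b : word) m : ccl (rev b) p = m -> m <= size b -> m <= size p ->
  drop (size b - m) b = winv (take m p).
Proof.
move=> Hc Hb Hp.
apply: (@eq_from_nth _ dl).
  by rewrite size_drop size_winv size_take; case: ifP => H; lia.
move=> i; rewrite size_drop => Hi.
have Hsz : size (take m p) = m by rewrite size_take; case: ifP => H; lia.
rewrite nth_winv ?Hsz; last by lia.
rewrite nth_take; last by lia.
have Hj : m - i.+1 < ccl (rev b) p by rewrite Hc; lia.
rewrite (ccl_nth Hj) nth_rev; last by lia.
rewrite inv_letterK nth_drop; congr nth; lia.
Qed.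

Lemma tie_left (p b : word) m : ccl (rev p) b = m -> size p = 2 * m -> m <= size b ->
  take m b = winv (drop m p).
Proof.
move=> Hc Hp Hb.
apply: (@eq_from_nth _ dl).
  by rewrite size_winv size_take size_drop; case: ifP => H; lia.
move=> i; rewrite size_take => Hi.
have Hi' : i < m by move: Hi; case: ifP => H; lia.
have Hsz : size (drop m p) = m by rewrite size_drop; lia.
rewrite nth_winv ?Hsz // nth_take // nth_drop.
have Hj : i < ccl (rev p) b by rewrite Hc.
rewrite (ccl_nth Hj) nth_rev; last by lia.
congr inv_letter; congr nth; lia.
Qed.

Lemma reducedb_take k w : reducedb w -> reducedb (take k w).
Proof. by move=> H; have [] := @reducedb_cat (take k w) (drop k w); rewrite ?cat_take_drop. Qed.
Lemma reducedb_drop k w : reducedb w -> reducedb (drop k w).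
Proof. by move=> H; have [] := @reducedb_cat (take k w) (drop k w); rewrite ?cat_take_drop. Qed.

Lemma len_mk w : reducedb w -> len (mk w) = size w.
Proof. by move=> H; rewrite /len val_mk. Qed.

Lemma mv_N1 n : MoveOK n (gx ** gy) gy.
Proof. exists (gx ** gy^-1), gy; split; [exact: gp_N2 | split; gcomp]. Qed.
Lemma mv_N2 n : MoveOK n (gx ** gy^-1) gy.
Proof. exists (gx ** gy), gy; split; [exact: gp_N1 | split; gcomp]. Qed.
Lemma mv_N3 n : MoveOK n (gy ** gx) gy.
Proof. exists (gy^-1 ** gx), gy; split; [exact: gp_N4 | split; gcomp]. Qed.
Lemma mv_N4 n : MoveOK n (gy^-1 ** gx) gy.
Proof. exists (gy ** gx), gy; split; [exact: gp_N3 | split; gcomp]. Qed.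
Lemma mv_N5 n : MoveOK n gx (gy ** gx).
Proof. exists gx, (gy ** gx^-1); split; [exact: gp_N6 | split; gcomp]. Qed.
Lemma mv_N6 n : MoveOK n gx (gy ** gx^-1).
Proof. exists gx, (gy ** gx); split; [exact: gp_N5 | split; gcomp]. Qed.
Lemma mv_N7 n : MoveOK n gx (gx ** gy).
Proof. exists gx, (gx^-1 ** gy); split; [exact: gp_N8 | split; gcomp]. Qed.
Lemma mv_N8 n : MoveOK n gx (gx^-1 ** gy).
Proof. exists gx, (gx ** gy); split; [exact: gp_N7 | split; gcomp]. Qed.

Definition Reducible n A B := exists C D w, MoveOK n C D /\
  len (w^-1 ** subst A B C ** w) + len (w^-1 ** subst A B D ** w) < len A + len B.

Ltac substE := rewrite ?subst_mul ?subst_inv ?subst_gx ?subst_gy.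

Lemma tie_move n A B l0 l : l0.1 != l.1 ->
  2 * ccl (rev (imgw A B l0)) (imgw A B l) = size (imgw A B l) ->
  2 * ccl (rev (imgw A B l)) (imgw A B l0) = size (imgw A B l) ->
  2 * ccl (rev (imgw A B l0)) (imgw A B l) <= size (imgw A B l0) ->
  0 < size (imgw A B l) ->
  Reducible n A B.
Proof.
move=> Hg H1 H2 H3 H4.
set p := imgw A B l in H1 H2 H3 H4.
set b := imgw A B l0 in H1 H2 H3.
set m := ccl (rev b) p in H1 H3.
have Hm2 : ccl (rev p) b = m by rewrite /m; lia.
have Hpr : reducedb p by exact: imgw_red.
have Hbr : reducedb b by exact: imgw_red.
have Hmb : m <= size b by lia.
have Hmp : m <= size p by lia.
have W2 : drop (size b - m) b = winv (take m p) := tie_right (erefl m) Hmb Hmp.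
have W3 : take m b = winv (drop m p) := tie_left Hm2 (esym H1) Hmb.
set U := mk (take m p).
set V := mk (drop m p).
set R := mk (take (size b - 2 * m) (drop m b)).
have EP : imgFG A B l = U ** V.
  by rewrite -[imgFG A B l]mk_val -/(imgw A B l) -/p -{1}(cat_take_drop m p) mk_cat.
have Eb : b = take m b ++ (take (size b - 2 * m) (drop m b) ++ drop (size b - m) b).
  have -> : drop (size b - m) b = drop (size b - 2 * m) (drop m b).
    by rewrite drop_drop; congr drop; lia.
  by rewrite !cat_take_drop.
have EQ : imgFG A B l0 = V^-1 ** R ** U^-1.
  rewrite -[imgFG A B l0]mk_val -/(imgw A B l0) -/b Eb !mk_cat W3 W2 !mk_winv.
  by rewrite mulA.
have LU : len U = m by rewrite /U len_mk ?reducedb_take // size_take; case: ifP; lia.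
have LV : len V = m by rewrite /V len_mk ?reducedb_drop // size_drop; lia.
have LR : len R = size b - 2 * m.
  rewrite /R len_mk ?reducedb_take ?reducedb_drop // size_take size_drop; case: ifP; lia.
have L1 : len (V ** imgFG A B l ** V^-1) <= 2 * m.
  rewrite EP !mulA mulgV mulg1; have := len_mul_le V U; lia.
have L1' : len (V ** (imgFG A B l)^-1 ** V^-1) <= 2 * m.
  have -> : V ** (imgFG A B l)^-1 ** V^-1 = (V ** imgFG A B l ** V^-1)^-1.
    by rewrite !invM invK !mulA.
  by rewrite len_inv.
have L2 : len (V ** (imgFG A B l0 ** imgFG A B l) ** V^-1) = size b - 2 * m.
  by rewrite EQ EP !mulA mulgV mulg1 mulVg mulg1 mulKVg.
have L2' : len (V ** (imgFG A B l0 ** imgFG A B l)^-1 ** V^-1) = size b - 2 * m.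
  have -> : V ** (imgFG A B l0 ** imgFG A B l)^-1 ** V^-1 =
            (V ** (imgFG A B l0 ** imgFG A B l) ** V^-1)^-1.
    by rewrite !invM invK !mulA.
  by rewrite len_inv.
have Hm0 : 0 < m by lia.
have Lp : len (imgFG A B l) = size p by [].
have Lb : len (imgFG A B l0) = size b by [].
have Hsp : size p = 2 * m by lia.
have Hsb : 2 * m <= size b by lia.
move: Hg L1 L1' L2 L2' Lp Lb.
clearbody U V R m p b.
clear -Hm0 Hsp Hsb.
case: l => [g s]; case: l0 => [g0 s0] /= Hg.
have -> : g0 = ~~ g by case: g g0 Hg => [] [].
clear Hg; rewrite /imgFG /=.
case: g; case: s; case: s0 => /=; rewrite ?invK ?len_inv => L1 L1' L2 L2' Lp Lb;
  rewrite ?invM ?invK in L1 L1' L2 L2'.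
- exists (gy ** gx), gy, V^-1; split; first exact: mv_N3.
  rewrite invK; substE; lia.
- exists (gx ** gy^-1), gy, V^-1; split; first exact: mv_N2.
  rewrite invK; substE; lia.
- exists (gy^-1 ** gx), gy, V^-1; split; first exact: mv_N4.
  rewrite invK; substE; lia.
- exists (gx ** gy), gy, V^-1; split; first exact: mv_N1.
  rewrite invK; substE; lia.
- exists gx, (gx ** gy), V^-1; split; first exact: mv_N7.
  rewrite invK; substE; lia.
- exists gx, (gy ** gx^-1), V^-1; split; first exact: mv_N6.
  rewrite invK; substE; lia.
- exists gx, (gx^-1 ** gy), V^-1; split; first exact: mv_N8.
  rewrite invK; substE; lia.
- exists gx, (gy ** gx), V^-1; split; first exact: mv_N5.
  rewrite invK; substE; lia.
Qed.


Lemma red_of n A B C D : MoveOK n C D ->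
  len (subst A B C) + len (subst A B D) < len A + len B -> Reducible n A B.
Proof.
move=> HM H; exists C, D, FG1; split => //.
by rewrite inv1 !mul1g !mulg1.
Qed.

Section NoRed.
Variables (n : nat) (A B : FG).
Hypothesis HN : ~ Reducible n A B.

Lemma nr_T C D : MoveOK n C D ->
    len A + len B <= len (subst A B C) + len (subst A B D).
Proof. move=> HM; rewrite leqNgt; apply/negP => H; apply: HN; exact: red_of HM H. Qed.

Lemma nr_ineqA : [/\ len A <= len (A ** B), len A <= len (A ** B^-1),
  len A <= len (B ** A) & len A <= len (B^-1 ** A)].
Proof.
have := nr_T (mv_N1 n); have := nr_T (mv_N2 n); have := nr_T (mv_N3 n);
have := nr_T (mv_N4 n); substE => *; split; lia.
Qed.

Lemma nr_ineqB : [/\ len B <= len (B ** A), len B <= len (B ** A^-1),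
  len B <= len (A ** B) & len B <= len (A^-1 ** B)].
Proof.
have := nr_T (mv_N5 n); have := nr_T (mv_N6 n); have := nr_T (mv_N7 n);
have := nr_T (mv_N8 n); substE => *; split; lia.
Qed.

Lemma len_swap u v : len (u ** v) = len (v^-1 ** u^-1).
Proof. by rewrite -invM len_inv. Qed.

Lemma pair_bounds (s s' : bool) :
  let a := if s then A^-1 else A in let b := if s' then B^-1 else B in
  [/\ len a <= len (a ** b), len b <= len (a ** b),
      len a <= len (b ** a) & len b <= len (b ** a)].
Proof.
have [i1 i2 i3 i4] := nr_ineqA; have [i5 i6 i7 i8] := nr_ineqB.
case: s; case: s' => /=; rewrite ?len_inv; split => //.
all: try (rewrite len_swap ?invK ?len_inv; done).
Qed.
Lemma nr_HH l l' : l.1 != l'.1 ->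
  2 * ccl (rev (imgw A B l)) (imgw A B l') <= size (imgw A B l) /\
  2 * ccl (rev (imgw A B l)) (imgw A B l') <= size (imgw A B l').
Proof.
case: l => g s; case: l' => g' s' /= Hg.
have -> : g' = ~~ g by case: g g' Hg => [] [].
have Hl := len_mul (imgFG A B (g, s)) (imgFG A B (~~ g, s')).
have [c1 c2] := ccl_le (rev (imgw A B (g, s))) (imgw A B (~~ g, s')).
rewrite size_rev in c1.
have [b1 b2] : len (imgFG A B (g, s)) <= len (imgFG A B (g, s) ** imgFG A B (~~ g, s')) /\
  len (imgFG A B (~~ g, s')) <= len (imgFG A B (g, s) ** imgFG A B (~~ g, s')).
  case: g {Hg Hl c1 c2}; rewrite /imgFG /=.
  - by have [h1 h2 h3 h4] := pair_bounds s' s.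
  - by have [h1 h2 h3 h4] := pair_bounds s s'.
move: Hl b1 b2 c1 c2; rewrite /len -/(imgw A B (g, s)) -/(imgw A B (~~ g, s')).
move=> Hl b1 b2 c1 c2; rewrite Hl in b1 b2; move: b1 b2 c1 c2; sl.
Qed.

Lemma same_gen (l1 l2 : letter) : l2 != inv_letter l1 -> l1.1 = l2.1 -> l2 = l1.
Proof.
case: l1 => g s; case: l2 => g' s' /= H Hg; subst g'.
by move: H; rewrite /inv_letter /= xpair_eqE eqxx /=; case: s; case: s'.
Qed.

Lemma other_inv (l1 l2 : letter) : l2.1 = l1.1 -> l2 != l1 -> l2 = inv_letter l1.
Proof.
case: l1 => g s; case: l2 => g' s' /= Hg; subst g'.
by rewrite /inv_letter /= xpair_eqE eqxx /=; case: s; case: s'.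
Qed.

Lemma take_winv m w : take m (winv w) = winv (drop (size w - m) w).
Proof. by rewrite /winv take_rev size_map map_drop. Qed.

Lemma winv_inj : injective winv.
Proof. by move=> u v H; rewrite -(winvK u) H winvK. Qed.

Lemma not_red_winv u : u != [::] -> ~~ reducedb (u ++ winv u).
Proof.
case/lastP: u => [|u a] // _.
rewrite -cats1 winv_cat -catA.
have -> : winv [:: a] = [:: inv_letter a] by [].
apply/negP => /reducedb_cat [_] /=.
by rewrite eqxx.
Qed.

Lemma nr_HT (Hne : forall l, 0 < size (imgw A B l)) l0 l l' :
  l != inv_letter l0 -> l' != inv_letter l ->
  2 * ccl (rev (imgw A B l0)) (imgw A B l) = size (imgw A B l) ->
  2 * ccl (rev (imgw A B l)) (imgw A B l') = size (imgw A B l) -> False.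
Proof.
move=> H0 H1 E1 E2.
case: (boolP (l0.1 == l.1)) => [/eqP Hg0|Hg0].
  have El := same_gen H0 Hg0; subst l.
  have := ccl_same (imgw_red A B l0) (Hne l0); lia.
case: (boolP (l.1 == l'.1)) => [/eqP Hg1|Hg1].
  have El := same_gen H1 Hg1; subst l'.
  have := ccl_same (imgw_red A B l) (Hne l); lia.
have Hg : l'.1 = l0.1.
  by move: Hg0 Hg1; case: (l0.1); case: (l.1); case: (l'.1).
have Hb := nr_HH Hg0.
case: (boolP (l' == l0)) => [/eqP El'|Hl'].
  subst l'; apply: HN; apply: (@tie_move n A B l0 l) => //; first by case: Hb.
have El' : l' = inv_letter l0 by exact: other_inv.
subst l'.
set p := imgw A B l in E1 E2 Hb.
set b := imgw A B l0 in E1 E2 Hb.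
rewrite imgw_inv -/b in E2.
set m := ccl (rev b) p in E1 Hb.
have Hm2 : ccl (rev p) (winv b) = m by lia.
have [Hmb _] := ccl_le (rev b) p; rewrite size_rev -/m in Hmb.
have Hmp : m <= size p by lia.
have W2 := tie_right (erefl m) Hmb Hmp.
have W3 := tie_left Hm2 (esym E1) (_ : m <= size (winv b)).
rewrite size_winv in W3; have {W3} W3 := W3 Hmb.
rewrite take_winv W2 in W3.
have W4 := winv_inj W3.
have Hp : p = take m p ++ winv (take m p) by rewrite W4 cat_take_drop.
have Hm0 : 0 < m by have := Hne l; rewrite -/p; lia.
have Hne' : take m p != [::].
  rewrite -size_eq0 size_take; case: ifP => H; apply/eqP; move: Hm0 Hmp H; sl.
have := not_red_winv Hne'; rewrite -Hp.
by rewrite imgw_red.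
Qed.

End NoRed.

Lemma comm_all A B X : (forall l, imgFG A B l = FG1 \/ imgFG A B l = X \/ imgFG A B l = X^-1) ->
  forall g h, substW A B g ** substW A B h = substW A B h ** substW A B g.
Proof.
move=> Himg.
have cl : forall l, imgFG A B l ** X = X ** imgFG A B l.
  by move=> l; case: (Himg l) => [->|[->|->]]; rewrite ?mul1g ?mulg1 ?mulVg ?mulgV.
have cX : forall g, substW A B g ** X = X ** substW A B g.
  elim=> [|l g IH] /=; first by rewrite mul1g mulg1.
  by rewrite mulA IH -!mulA cl.
have cXi : forall g, substW A B g ** X^-1 = X^-1 ** substW A B g.
  move=> g; apply: (@mulI X); rewrite -mulA -cX mulA mulgV mulg1 mulKVg //.
have cg : forall g l, substW A B g ** imgFG A B l = imgFG A B l ** substW A B g.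
  move=> g l; case: (Himg l) => [->|[->|->]]; rewrite ?mul1g ?mulg1 //.
move=> g; elim=> [|l h IH] /=; first by rewrite mul1g mulg1.
by rewrite -mulA cg mulA IH mulA.
Qed.

Lemma gxy_ncomm : gx ** gy <> gy ** gx.
Proof. by move/(congr1 (@proj1_sig _ _)); vm_compute. Qed.

Lemma basis_nontriv A B : basis A B -> A <> FG1 /\ B <> FG1.
Proof.
case=> g [h [Hg Hh]]; split => E; subst.
- have Hc : forall l, imgFG FG1 B l = FG1 \/ imgFG FG1 B l = B \/ imgFG FG1 B l = B^-1.
    by case=> [] [] []; rewrite /imgFG /= ?inv1; auto.
  have := comm_all Hc (proj1_sig g) (proj1_sig h).
  rewrite -/(subst _ _ g) -/(subst _ _ h) Hg Hh; exact: gxy_ncomm.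
- have Hc : forall l, imgFG A FG1 l = FG1 \/ imgFG A FG1 l = A \/ imgFG A FG1 l = A^-1.
    by case=> [] [] []; rewrite /imgFG /= ?inv1; auto.
  have := comm_all Hc (proj1_sig g) (proj1_sig h).
  rewrite -/(subst _ _ g) -/(subst _ _ h) Hg Hh; exact: gxy_ncomm.
Qed.

Lemma contra_gen A B (P : pred letter) g0 : basis A B ->
  (forall l, P l -> all (fun c : letter => c.1 == g0) (imgw A B l)) ->
  (forall ls, reducedb ls -> has (predC P) ls -> 1 < size (Pw A B ls)) -> False.
Proof.
move=> Hb Himg Hl.
have [g Hg] := basis_span Hb (mk [:: (~~ g0, false)]).
have HP : Pw A B (proj1_sig g) = [:: (~~ g0, false)] by rewrite /Pw -/(subst A B g) Hg.
have Hr : reducedb (proj1_sig g) by case: g {Hg HP}.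
case: (boolP (has (predC P) (proj1_sig g))) => Hh.
  by have := Hl _ Hr Hh; rewrite HP.
have Hall : all P (proj1_sig g) by rewrite has_predC negbK in Hh.
have := gen_case Himg Hall; rewrite HP /= andbT.
by case: (g0).
Qed.

Lemma len1 u : len u = 1 -> exists a, u = mk [:: a].
Proof.
case: u => w Hw; rewrite /len /=; case: w Hw => [|a [|b w]] //= Hw _.
by exists a; apply: FGeq.
Qed.

Lemma size_imgw A B l : size (imgw A B l) = if l.1 then len B else len A.
Proof. by case: l => [[] []] /=; rewrite /imgw /imgFG /=; try exact: len_inv. Qed.

Lemma imgw_single A B a0 s :
  all (fun c : letter => c.1 == a0.1) (imgw (mk [:: a0]) B (false, s)) /\
  all (fun c : letter => c.1 == a0.1) (imgw A (mk [:: a0]) (true, s)).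
Proof.
by case: s; rewrite /imgw /imgFG /= ?sval_inv /= /winv /= /inv_letter /= eqxx.
Qed.

Lemma final n A B : basis A B -> ~ Reducible n A B -> goodpair n A B.
Proof.
move=> Hb HN.
have [HA HB] := basis_nontriv Hb.
have LA : 0 < len A by rewrite lt0n; apply/eqP => /len0.
have LB : 0 < len B by rewrite lt0n; apply/eqP => /len0.
have Hne : forall l, 0 < size (imgw A B l) by move=> l; rewrite size_imgw; case: (l.1).
have HH := nr_HH HN.
have HT := nr_HT HN Hne.
case: (ltnP 1 (len A)) => HA2; case: (ltnP 1 (len B)) => HB2.
- exfalso; apply: (@contra_gen A B pred0 true Hb) => // ls Hr Hh.
  apply: (long_case Hne HH HT) => //.
    by move=> l; rewrite size_imgw; case: (l.1).
  by case: ls Hh {Hr}.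
- have [b0 Eb] : exists b0, B = mk [:: b0] by apply: len1; lia.
  exfalso; apply: (@contra_gen A B (fun l : letter => l.1 == true) b0.1 Hb).
    move=> [g s] /= /eqP ->; rewrite Eb; by case: (imgw_single A A b0 s).
  move=> ls Hr Hh; apply: (leq_trans HA2).
  apply: (short_case Hne HH HT (gs := true) (LB := len A) HA2 _ _ Hr Hh).
  + by move=> l Hl; rewrite size_imgw Hl; lia.
  + by move=> l; rewrite size_imgw; case: (l.1).
- have [a0 Ea] : exists a0, A = mk [:: a0] by apply: len1; lia.
  exfalso; apply: (@contra_gen A B (fun l : letter => l.1 == false) a0.1 Hb).
    move=> [g s] /= /eqP ->; rewrite Ea; by case: (imgw_single B B a0 s).
  move=> ls Hr Hh; apply: (leq_trans HB2).
  apply: (short_case Hne HH HT (gs := false) (LB := len B) HB2 _ _ Hr Hh).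
  + by move=> l Hl; rewrite size_imgw Hl; lia.
  + by move=> l; rewrite size_imgw; case: (l.1).
- have [a0 Ea] : exists a0, A = mk [:: a0] by apply: len1; lia.
  have [b0 Eb] : exists b0, B = mk [:: b0] by apply: len1; lia.
  case: (boolP (a0.1 == b0.1)) => Hab.
    exfalso; apply: (@contra_gen A B predT a0.1 Hb).
      move=> [[] s] _; rewrite ?Ea ?Eb.
      + by rewrite (eqP Hab); case: (imgw_single A A b0 s).
      + by case: (imgw_single B B a0 s).
    by move=> ls _ /hasP [x _].
  subst A B; clear HA HB LA LB Hne HH HT HA2 HB2 Hb HN; move: Hab.
  case: a0 => [[] []]; case: b0 => [[] []] //= _.
  + apply: (gp_eq (gp_L8 _)); gcomp.
  + apply: (gp_eq (gp_L7 _)); gcomp.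
  + apply: (gp_eq (gp_L6 _)); gcomp.
  + apply: (gp_eq (gp_L5 _)); gcomp.
  + apply: (gp_eq (gp_L4 _)); gcomp.
  + apply: (gp_eq (gp_L3 _)); gcomp.
  + apply: (gp_eq (gp_L2 _)); gcomp.
  + apply: (gp_eq (gp_L1 _)); gcomp.
Qed.

Theorem main_ind n N : forall A B, len A + len B <= N -> basis A B -> goodpair n A B.
Proof.
elim: N => [|N IH] A B Hl Hb.
  case: (classic (Reducible n A B)) => HR; last exact: final.
  by case: HR => C [D [w [_ H]]]; lia.
case: (classic (Reducible n A B)) => HR; last exact: final.
case: HR => C [D [w [HM H]]].
apply: (reduce_step (w := w) HM).
apply: IH; first lia.
exact: (@basis_step n A B C D w HM Hb).
Qed.

Theorem proposition7 (n : nat) (phi : FG -> FG) :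
  2 < n -> is_aut phi ->
  AC_equiv (phi AK1, phi (AK2 n)) (AK1, AK2 n).
Proof.
move=> _ [Hhom Hbij].
have Hh : ishom phi := Hhom.
rewrite (hom_subst AK1 Hh) (hom_subst (AK2 n) Hh).
apply: (@main_ind n (len (phi gx) + len (phi gy))) => //.
case: Hbij => psi H1 H2.
by exists (psi gx), (psi gy); rewrite -!(hom_subst _ Hh) !H2.
Qed.
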